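(* Let $D$ be a directed graph (quiver) with vertex set $I$, $A=kD$ its path algebra, and let $r$ be any of $r_b,r_k,r_l,r_j$. Let $s,t\in I$ with $A_{st}\neq 0$. Then (i) $r(A_{st})=0$ if and only if $A_{ts}\neq 0$; (ii) $r(A_{st})=A_{st}$ if and only if $A_{ts}=0$.
   Context: $D$ may be infinite and may have multiple arrows and loops; $k$ is a field. The path algebra $A=kD=\bigoplus_{i,j\in I}A_{ij}$, where $A_{ij}$ is the $k$-span of all paths from $i$ to $j$ of length $\ge1$, together with the trivial path $e_{ii}$ when $i=j$; multiplication is concatenation (a path from $i$ to $j$ times a path from $j$ to $l$ is the concatenated path from $i$ to $l$, other products zero, $e_{ii}$ acting as identity on paths starting/ending at $i$). Thus $A_{ij}\neq 0$ iff there is a path from $i$ to $j$. $A$ is a generalized matrix algebra, and $A_{st}$ is regarded as a $\Gamma$-ring with $\Gamma=A_{ts}$ (ternary product via path multiplication); $r(A_{st})$ is its radical as a $\Gamma$-ring: $r_b$ Baer (prime) radical, $r_k$ nil radical, $r_l$ Levitzki radical, $r_j$ Jacobson radical (in the sense of Coppage–Luh), where e.g. $y\in A_{st}$ is right quasi-regular if for each $x\in A_{ts}$ there is $u\in A_{ts}A_{st}$ with $yxu+yx+u$... (standard Coppage–Luh definition). *)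

(* Defs.v *)
From mathcomp Require Import all_boot all_algebra.
From Stdlib Require List.
Set Implicit Arguments. Unset Strict Implicit. Unset Printing Implicit Defensive.
Import GRing.Theory.
Local Open Scope ring_scope.

(* ---------- Path algebra kD of a quiver D = (I, Q1, src, tgt) ----------
   A path is recorded by its list of arrows (read left to right); a vector of
   kD restricted to A_{ij} is a finitely supported function from arrow lists
   to k, supported on lists that form a path from i to j (the empty list
   being the trivial path e_ii, allowed only when i = j). *)

Definition vec (k : fieldType) (Q1 : Type) := seq Q1 -> k.

Fixpoint walk (I Q1 : Type) (src tgt : Q1 -> I) (i j : I) (l : seq Q1) : Prop :=
  match l with
  | [::] => i = j
  | a :: l' => src a = i /\ walk src tgt (tgt a) j l'
  end.

Section Vec.
Variables (k : fieldType) (Q1 : Type).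
Local Notation V := (vec k Q1).

Definition vzero : V := fun _ => 0.
Definition vadd (f g : V) : V := fun l => f l + g l.
Definition vopp (f : V) : V := fun l => - f l.
Definition veq (f g : V) : Prop := forall l, f l = g l.
Definition vmul (f g : V) : V :=
  fun l => \sum_(n < (size l).+1) f (take n l) * g (drop n l).
Definition finsupp (f : V) : Prop :=
  exists S : seq (seq Q1), forall l, f l != 0 -> List.In l S.
End Vec.

Definition inA (k : fieldType) (I Q1 : Type) (src tgt : Q1 -> I) (i j : I)
  (f : vec k Q1) : Prop :=
  finsupp f /\ forall l, f l != 0 -> walk src tgt i j l.

Definition Anz (k : fieldType) (I Q1 : Type) (src tgt : Q1 -> I) (i j : I) : Prop :=
  exists f : vec k Q1, inA src tgt i j f /\ ~ veq f (@vzero k Q1).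

Section GammaRing.
Variables (k : fieldType) (Q1 : Type).
Local Notation V := (vec k Q1).
Variables (M G : V -> Prop).

Definition tp (a g b : V) : V := vmul (vmul a g) b.

Definition subgroup (J : V -> Prop) : Prop :=
  (forall x, J x -> M x) /\ J (@vzero k Q1) /\
  (forall x y, J x -> J y -> J (vadd x (vopp y))).

Definition ideal (J : V -> Prop) : Prop :=
  subgroup J /\
  (forall a g m, J a -> G g -> M m -> J (tp a g m) /\ J (tp m g a)).

Definition right_ideal (J : V -> Prop) : Prop :=
  subgroup J /\ (forall a g m, J a -> G g -> M m -> J (tp a g m)).

Definition prime_ideal (P : V -> Prop) : Prop :=
  ideal P /\ (exists m, M m /\ ~ P m) /\
  forall A B, ideal A -> ideal B ->
    (forall a g b, A a -> G g -> B b -> P (tp a g b)) ->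
    (forall a, A a -> P a) \/ (forall b, B b -> P b).

Definition nilpotent_elt (x : V) : Prop :=
  forall g, G g -> exists n, veq (iter n (fun y => tp x g y) x) (@vzero k Q1).

Definition nil_ideal (J : V -> Prop) : Prop :=
  ideal J /\ forall x, J x -> nilpotent_elt x.

Fixpoint prodset (F D : seq V) (n : nat) (z : V) : Prop :=
  match n with
  | O => List.In z F
  | S n' => exists x d w, List.In x F /\ List.In d D /\ prodset F D n' w /\
                          z = tp x d w
  end.

Definition loc_nilpotent (Sb : V -> Prop) : Prop :=
  forall F D : seq V, (forall f, List.In f F -> Sb f) ->
    (forall d, List.In d D -> G d) ->
    exists n, (0 < n)%N /\ forall z, prodset F D n z -> veq z (@vzero k Q1).

Definition lnil_ideal (J : V -> Prop) : Prop := ideal J /\ loc_nilpotent J.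

Definition in_GM (u : V) : Prop :=
  exists ps : seq (V * V), (forall p, List.In p ps -> G p.1 /\ M p.2) /\
    veq u (fun l => \sum_(p <- ps) vmul p.1 p.2 l).

Definition rqr (y : V) : Prop :=
  forall x, G x -> exists u, in_GM u /\
    veq (vadd (vadd (vmul (vmul x y) u) (vmul x y)) u) (@vzero k Q1).

Definition rqr_right_ideal (J : V -> Prop) : Prop :=
  right_ideal J /\ forall y, J y -> rqr y.

Definition family_sum (Fam : (V -> Prop) -> Prop) (x : V) : Prop :=
  exists xs : seq V, (forall y, List.In y xs -> exists J, Fam J /\ J y) /\
    veq x (fun l => \sum_(y <- xs) y l).

Definition rad_baer (x : V) : Prop := M x /\ forall P, prime_ideal P -> P x.
Definition rad_nil : V -> Prop := family_sum nil_ideal.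
Definition rad_lev : V -> Prop := family_sum lnil_ideal.
Definition rad_jac : V -> Prop := family_sum rqr_right_ideal.
End GammaRing.

Inductive radkind := Rb | Rk | Rl | Rj.

Definition radical (k : fieldType) (Q1 : Type) (r : radkind)
  (M G : vec k Q1 -> Prop) : vec k Q1 -> Prop :=
  match r with
  | Rb => rad_baer M G
  | Rk => rad_nil M G
  | Rl => rad_lev M G
  | Rj => rad_jac M G
  end.

(* Main.v *)
Require Import Defs.
From mathcomp Require Import all_boot all_algebra.
From mathcomp Require Import zify.
From Stdlib Require Import Classical FunctionalExtensionality.
Set Implicit Arguments. Unset Strict Implicit. Unset Printing Implicit Defensive.
Import GRing.Theory.
Local Open Scope ring_scope.

Section Aux.
Variables (k : fieldType) (Q1 : Type).
Local Notation V := (vec k Q1).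
Local Notation Z := (@vzero k Q1).

Lemma veqE (f g : V) : veq f g -> f = g.
Proof. move=> H; apply: functional_extensionality => l; exact: H. Qed.

Lemma vmul0l (g : V) : vmul Z g = Z.
Proof. apply: veqE => l; rewrite /vmul /vzero big1 // => i _; exact: mul0r. Qed.

Lemma vmul0r (g : V) : vmul g Z = Z.
Proof. apply: veqE => l; rewrite /vmul /vzero big1 // => i _; exact: mulr0. Qed.

Lemma vmul_nil (f g : V) : vmul f g [::] = f [::] * g [::].
Proof. by rewrite /vmul big_ord_recl big_ord0 addr0. Qed.

Definition bnd (f : V) := exists N, forall l, f l != 0 -> (size l <= N)%N.
Definition lead (f : V) L := f L != 0 /\ forall l, f l != 0 -> (size l <= size L)%N.

Lemma bnd_finsupp f : finsupp f -> bnd f.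
Proof.
case=> S HS.
have [N HN] : exists N, forall l, List.In l S -> (size l <= N)%N.
  clear HS; elim: S => [|a S [N HN]]; first by exists 0%N.
  exists (maxn (size a) N) => l /= [<-|Hl]; first by rewrite leq_maxl.
  by rewrite (leq_trans (HN _ Hl)) // leq_maxr.
by exists N => l /HS /HN.
Qed.

Lemma lead_nz f L : lead f L -> ~ veq f Z.
Proof. by move=> [H _] E; move: H; rewrite E /vzero eqxx. Qed.

Lemma lead_ex f : bnd f -> ~ veq f Z -> exists L, lead f L.
Proof.
move=> [N HN] Hnz.
apply: NNPP => Hno.
have [l0 Hl0] : exists l, f l != 0.
  apply: NNPP => H; apply: Hnz => l; rewrite /vzero.
  case: (eqVneq (f l) 0) => // Hf; exfalso; apply: H; by exists l.
have Hm : forall m, exists l, f l != 0 /\ (m <= size l)%N.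
  elim=> [|m [l [Hl Hm]]]; first by exists l0.
  have : ~ (forall l', f l' != 0 -> (size l' <= size l)%N).
    by move=> H; apply: Hno; exists l.
  move=> Hx; have [l' Hl'] := not_all_ex_not _ _ Hx.
  have [H1 H2] := imply_to_and _ _ Hl'.
  exists l'; split => //.
  have H3 : (size l < size l')%N by rewrite ltnNge; apply/negP.
  lia.
have [l [Hl Hs]] := Hm N.+1.
move: (HN l Hl); lia.
Qed.

Lemma vmul_lead_coef f g L1 L2 : lead f L1 -> lead g L2 ->
  vmul f g (L1 ++ L2) = f L1 * g L2.
Proof.
move=> [Hf1 Hf2] [Hg1 Hg2].
have Hlt : (size L1 < (size (L1 ++ L2)).+1)%N by rewrite size_cat; lia.
rewrite /vmul (bigD1 (Ordinal Hlt)) //= take_size_cat // drop_size_cat //.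
rewrite big1 ?addr0 // => i /eqP Hi.
have Hi' : nat_of_ord i <> size L1.
  by move=> E; apply: Hi; apply: val_inj.
have Hile : (nat_of_ord i <= size L1 + size L2)%N by rewrite -size_cat -ltnS.
case: (eqVneq (f (take i (L1 ++ L2))) 0) => [->|Hf]; first by rewrite mul0r.
case: (eqVneq (g (drop i (L1 ++ L2))) 0) => [->|Hg]; first by rewrite mulr0.
exfalso. have A := Hf2 _ Hf. have B := Hg2 _ Hg.
move: A B Hile Hi'; rewrite size_drop size_take.
move: (nat_of_ord i) => n; rewrite size_cat.
case: (ltnP n (size L1 + size L2)) => H; lia.
Qed.

Lemma lead_mul f g L1 L2 : lead f L1 -> lead g L2 -> lead (vmul f g) (L1 ++ L2).
Proof.
move=> Hf Hg; split.
  rewrite (vmul_lead_coef Hf Hg) mulf_neq0 //; [exact: Hf.1 | exact: Hg.1].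
move=> l.
case: (boolP [exists n : 'I_(size l).+1, f (take n l) * g (drop n l) != 0]).
  move=> /existsP [n]; rewrite mulf_eq0 negb_or => /andP [Ha Hb] _.
  rewrite -(cat_take_drop n l) !size_cat leq_add //; [exact: Hf.2 | exact: Hg.2].
move=> /existsP Hn; rewrite /vmul big1 ?eqxx // => i _.
by apply/eqP; apply/negPn/negP => H; apply: Hn; exists i.
Qed.

Lemma bnd_mul f g : bnd f -> bnd g -> bnd (vmul f g).
Proof.
move=> [N1 H1] [N2 H2]; exists (N1 + N2)%N => l.
case: (boolP [exists n : 'I_(size l).+1, f (take n l) * g (drop n l) != 0]).
  move=> /existsP [n]; rewrite mulf_eq0 negb_or => /andP [Ha Hb] _.
  rewrite -(cat_take_drop n l) !size_cat leq_add //; [exact: H1 | exact: H2].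
move=> /existsP Hn; rewrite /vmul big1 ?eqxx // => i _.
by apply/eqP; apply/negPn/negP => H; apply: Hn; exists i.
Qed.

Lemma bnd_add f g : bnd f -> bnd g -> bnd (vadd f g).
Proof.
move=> [N1 H1] [N2 H2]; exists (maxn N1 N2) => l; rewrite /vadd.
case: (eqVneq (f l) 0) => [->|Hf].
  rewrite add0r => /H2 H; by rewrite (leq_trans H) // leq_maxr.
move=> _; by rewrite (leq_trans (H1 _ Hf)) // leq_maxl.
Qed.

Lemma bnd_sum (ps : seq (V * V)) : (forall p, List.In p ps -> bnd p.1 /\ bnd p.2) ->
  bnd (fun l => \sum_(p <- ps) vmul p.1 p.2 l).
Proof.
elim: ps => [|p ps IH] H.
  by exists 0%N => l; rewrite big_nil eqxx.
have -> : (fun l => \sum_(q <- p :: ps) vmul q.1 q.2 l) =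
   vadd (vmul p.1 p.2) (fun l => \sum_(q <- ps) vmul q.1 q.2 l).
  by apply: veqE => l; rewrite big_cons.
have [Ha Hb] := H p (or_introl erefl).
apply: bnd_add; first exact: bnd_mul.
by apply: IH => q Hq; apply: H; right.
Qed.

Lemma lead_out f L l : lead f L -> (size L < size l)%N -> f l = 0.
Proof.
move=> [_ H] Hs; apply/eqP; apply: contraTT Hs => /H; by rewrite -leqNgt.
Qed.

End Aux.

Section Main.
Variables (k : fieldType) (I Q1 : Type) (src tgt : Q1 -> I).
Local Notation V := (vec k Q1).
Local Notation Z := (@vzero k Q1).
Local Notation inAk := (@inA k I Q1 src tgt).

Lemma inA0 i j : inAk i j Z.
Proof. by split; [exists [::] => l; rewrite /vzero eqxx | move=> l; rewrite /vzero eqxx]. Qed.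

Lemma inA_add i j f g : inAk i j f -> inAk i j g ->
  inAk i j (vadd f g).
Proof.
move=> [[S1 H1] W1] [[S2 H2] W2]; split.
  exists (S1 ++ S2) => l; rewrite /vadd => Hl; apply: List.in_or_app.
  case: (eqVneq (f l) 0) => [E|Hf]; last by left; exact: H1.
  by move: Hl; rewrite E add0r => Hg; right; exact: H2.
move=> l; rewrite /vadd.
case: (eqVneq (f l) 0) => [->|Hf]; last by move=> _; exact: W1.
by rewrite add0r => Hg; exact: W2.
Qed.

Lemma inA_opp i j f : inAk i j f -> inAk i j (vopp f).
Proof.
move=> [[S1 H1] W1]; split.
  by exists S1 => l; rewrite /vopp oppr_eq0; exact: H1.
by move=> l; rewrite /vopp oppr_eq0; exact: W1.
Qed.

Lemma inA_sum i j (xs : seq V) : (forall y, List.In y xs -> inAk i j y) ->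
  inAk i j (fun l => \sum_(y <- xs) y l).
Proof.
elim: xs => [|x xs IH] H.
  have -> : (fun l => \sum_(y <- [::]) y l) = Z by apply: veqE => l; rewrite big_nil.
  exact: inA0.
have -> : (fun l => \sum_(y <- x :: xs) y l) = vadd x (fun l => \sum_(y <- xs) y l).
  by apply: veqE => l; rewrite big_cons.
apply: inA_add; first by apply: H; left.
by apply: IH => y Hy; apply: H; right.
Qed.

Lemma sum_zeros (xs : seq V) : (forall y, List.In y xs -> veq y Z) ->
  veq (fun l => \sum_(y <- xs) y l) Z.
Proof.
elim: xs => [|x xs IH] H l; first by rewrite big_nil.
rewrite big_cons (H x (or_introl erefl) l) (IH _ l) /vzero ?addr0 //.
by move=> y Hy; apply: H; right.
Qed.

Lemma fam_zero (Fam : (V -> Prop) -> Prop) x :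
  (forall J y, Fam J -> J y -> veq y Z) -> family_sum Fam x -> veq x Z.
Proof.
move=> H [xs [Hxs E]] l; rewrite E; apply: sum_zeros => y /Hxs [J [HJ Hy]].
exact: H HJ Hy.
Qed.

Lemma fam_in i j (Fam : (V -> Prop) -> Prop) x :
  (forall J y, Fam J -> J y -> inAk i j y) -> family_sum Fam x ->
  inAk i j x.
Proof.
move=> H [xs [Hxs E]]; rewrite (veqE E); apply: inA_sum => y /Hxs [J [HJ Hy]].
exact: H HJ Hy.
Qed.

Lemma zero_fam (Fam : (V -> Prop) -> Prop) x : veq x Z -> family_sum Fam x.
Proof. by move=> H; exists [::]; split => // l; rewrite big_nil H. Qed.

Lemma M_fam (Fam : (V -> Prop) -> Prop) (J : V -> Prop) x :
  Fam J -> J x -> family_sum Fam x.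
Proof.
move=> HF Hx; exists [:: x]; split.
  by move=> y [<-|[]]; exists J.
by move=> l; rewrite big_cons big_nil addr0.
Qed.

Section NoA.
Variables (s t : I).
Local Notation M := (inAk s t).
Local Notation G := (inAk t s).
Hypothesis HnA : ~ Anz k src tgt t s.

Lemma noA_G g : G g -> g = Z.
Proof. move=> Hg; apply: veqE; apply: NNPP => Hn; apply: HnA; by exists g. Qed.

Lemma subgroup_M : subgroup M M.
Proof.
split => //; split; first exact: inA0.
by move=> x y Hx Hy; apply: inA_add => //; exact: inA_opp.
Qed.

Lemma ideal_M : ideal M G M.
Proof.
split; first exact: subgroup_M.
move=> a g m Ha Hg Hm; rewrite (noA_G Hg) /tp !(vmul0r, vmul0l).
split; exact: inA0.
Qed.

Lemma rad_noA r x : radical r M G x <-> M x.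
Proof.
case: r => /=.
- split; first by case.
  move=> Hx; split => // P [HP [[m [Hm Hnm]] Hpr]]; exfalso.
  have Hz : P Z := HP.1.2.1.
  have := Hpr M M ideal_M ideal_M.
  case.
  + by move=> a g b Ha Hg Hb; rewrite (noA_G Hg) /tp !(vmul0r, vmul0l).
  + by move=> H; apply: Hnm; apply: H.
  + by move=> H; apply: Hnm; apply: H.
- split.
    by apply: fam_in => J y [[[HJ _] _] _] Hy; exact: HJ.
  move=> Hx; apply: (@M_fam _ M) => //; split; first exact: ideal_M.
  move=> y Hy g Hg; exists 1%N; rewrite /= (noA_G Hg) /tp !(vmul0r, vmul0l).
  by move=> l.
- split.
    by apply: fam_in => J y [[[HJ _] _] _] Hy; exact: HJ.
  move=> Hx; apply: (@M_fam _ M) => //; split; first exact: ideal_M.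
  move=> F D HF HD; exists 1%N; split => //.
  move=> z [x' [d [w [_ [Hd [_ ->]]]]]].
  by rewrite (noA_G (HD d Hd)) /tp !(vmul0r, vmul0l) => l.
- split.
    by apply: fam_in => J y [[[HJ _] _] _] Hy; exact: HJ.
  move=> Hx; apply: (@M_fam _ M) => //; split.
    split; first exact: subgroup_M.
    move=> a g m Ha Hg Hm; rewrite (noA_G Hg) /tp !(vmul0r, vmul0l); exact: inA0.
  move=> y Hy x' Hx'; exists Z; split.
    by exists [::]; split => // l; rewrite big_nil.
  by rewrite (noA_G Hx') !vmul0l => l; rewrite /vadd /vzero !addr0.
Qed.
End NoA.

Lemma lead_of i j f : inAk i j f -> ~ veq f Z -> exists L, lead f L.
Proof. by move=> H Hnz; apply: lead_ex => //; apply: bnd_finsupp; exact: H.1. Qed.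

Lemma iter_lead (y g : V) Ly Lg : lead y Ly -> lead g Lg ->
  forall n, exists L, lead (iter n (fun z => tp y g z) y) L.
Proof.
move=> Hy Hg; elim=> [|n [L HL]]; first by exists Ly.
exists ((Ly ++ Lg) ++ L); exact: lead_mul (lead_mul Hy Hg) HL.
Qed.

Lemma prodset_iter (y g : V) n : prodset [:: y] [:: g] n (iter n (fun z => tp y g z) y).
Proof.
elim: n => [|n IH] /=; first by left.
exists y, g, (iter n (fun z => tp y g z) y).
split; [left => // | split; [left => // | split; [exact: IH | reflexivity]]].
Qed.

Section YesA.
Variables (s t : I).
Local Notation M := (inAk s t).
Local Notation G := (inAk t s).
Hypothesis HA : Anz k src tgt t s.
Hypothesis HM : Anz k src tgt s t.

Lemma rad_A r x : radical r M G x <-> veq x Z.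
Proof.
have [g [Hg Hgnz]] := HA.
have [Lg HLg] := lead_of Hg Hgnz.
case: r => /=.
- split.
    move=> [_ H]; apply: (H (fun v => veq v Z)).
    split.
      split.
        split; first by move=> v Hv; rewrite (veqE Hv); exact: inA0.
        split; first by move=> l.
        by move=> a b Ha Hb l; rewrite /vadd /vopp Ha Hb /vzero oppr0 addr0.
      move=> a g' m Ha Hg' Hm; rewrite (veqE Ha) /tp !(vmul0r, vmul0l).
      by split => l.
    split.
      have [f [Hf Hfnz]] := HM; by exists f.
    move=> A B [[HA' _] _] [[HB' _] _] Hprod.
    case: (classic (forall a, A a -> veq a Z)) => HAz; first by left.
    right => b Hb; apply: NNPP => Hbnz.
    have [a Ha] := not_all_ex_not _ _ HAz.
    have [Ha1 Ha2] := imply_to_and _ _ Ha.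
    have [La HLa] := lead_of (HA' a Ha1) Ha2.
    have [Lb HLb] := lead_of (HB' b Hb) Hbnz.
    apply: lead_nz (Hprod a g b Ha1 Hg Hb).
    exact: lead_mul (lead_mul HLa HLg) HLb.
  move=> Hx; rewrite (veqE Hx); split; first exact: inA0.
  by move=> P [[[_ [HP _]] _] _].
- split; last exact: zero_fam.
  apply: fam_zero => J y [[[HJ _] _] Hnil] Hy; apply: NNPP => Hnz.
  have [Ly HLy] := lead_of (HJ y Hy) Hnz.
  have [n Hn] := Hnil y Hy g Hg.
  have [L HL] := iter_lead HLy HLg n.
  exact: lead_nz HL Hn.
- split; last exact: zero_fam.
  apply: fam_zero => J y [[[HJ _] _] Hloc] Hy; apply: NNPP => Hnz.
  have [Ly HLy] := lead_of (HJ y Hy) Hnz.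
  have HF : forall f, List.In f [:: y] -> J f by move=> f [<-|[]].
  have HD : forall d, List.In d [:: g] -> inAk t s d by move=> d [<-|[]].
  have [n [_ Hn]] := Hloc [:: y] [:: g] HF HD.
  have [L HL] := iter_lead HLy HLg n.
  exact: lead_nz HL (Hn _ (prodset_iter y g n)).
- split; last exact: zero_fam.
  apply: fam_zero => J y [[[HJ _] _] Hrqr] Hy; apply: NNPP => Hnz.
  have [Ly HLy] := lead_of (HJ y Hy) Hnz.
  have HLw := lead_mul HLg HLy.
  case: (eqVneq (vmul g y [::]) 0) => Hw0.
  +
    have [u [[ps [Hps Hue]] Heq]] := Hrqr y Hy g Hg.
    have Hbu : bnd u.
      rewrite (veqE Hue); apply: bnd_sum => p Hp; have [H1 H2] := Hps p Hp.
      by split; apply: bnd_finsupp; [exact: H1.1 | exact: H2.1].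
    have Hu0 := Heq [::]; rewrite /vadd vmul_nil Hw0 mul0r !add0r in Hu0.
    have Hpos : (0 < size (Lg ++ Ly))%N.
      case: (posnP (size (Lg ++ Ly))) => // /size0nil E.
      by move: HLw.1; rewrite E Hw0 eqxx.
    case: (classic (veq u Z)) => Huz.
      have := Heq (Lg ++ Ly); rewrite (veqE Huz) /vadd vmul0r /vzero addr0 add0r.
      by move=> E; move: HLw.1; rewrite E eqxx.
    have [Lu HLu] := lead_ex Hbu Huz.
    case: (posnP (size Lu)) => HLu0.
      by move: HLu.1; rewrite (size0nil HLu0) Hu0 eqxx.
    have := Heq ((Lg ++ Ly) ++ Lu); rewrite /vadd (vmul_lead_coef HLw HLu).
    have S1 : (size (Lg ++ Ly) < size ((Lg ++ Ly) ++ Lu))%N.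
      by rewrite (size_cat (Lg ++ Ly)); lia.
    have S2 : (size Lu < size ((Lg ++ Ly) ++ Lu))%N.
      by rewrite (size_cat (Lg ++ Ly)); lia.
    rewrite (lead_out HLw S1) (lead_out HLu S2).
    rewrite !addr0 /vzero => /eqP; rewrite mulf_eq0 => /orP [] /eqP E.
      by move: HLw.1; rewrite E eqxx.
    by move: HLu.1; rewrite E eqxx.
  +
    set d := vmul g y [::] in Hw0.
    set x' := fun l => - d^-1 * g l.
    have Hx' : G x'.
      have [[S HS] W] := Hg; split.
        exists S => l; rewrite /x'; case: (eqVneq (g l) 0) => [->|Hl].
          by rewrite mulr0 eqxx.
        by move=> _; exact: HS.
      move=> l; rewrite /x'; case: (eqVneq (g l) 0) => [->|Hl].
        by rewrite mulr0 eqxx.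
      by move=> _; exact: W.
    have [u [_ Heq]] := Hrqr y Hy x' Hx'.
    have E : x' [::] * y [::] = -1.
      rewrite /x' /= -mulrA mulNr.
      have -> : g [::] * y [::] = d by rewrite /d vmul_nil.
      by rewrite mulVf.
    move: (Heq [::]); rewrite /vadd /vzero !vmul_nil E mulN1r addrAC addNr add0r.
    by move=> /eqP; rewrite oppr_eq0 oner_eq0.
Qed.
End YesA.
End Main.

Theorem lemma3p1 (k : fieldType) (I Q1 : Type) (src tgt : Q1 -> I)
  (r : radkind) (s t : I) :
  Anz k src tgt s t ->
  ((forall x, radical r (inA src tgt s t) (inA src tgt t s) x <->
              veq x (@vzero k Q1)) <-> Anz k src tgt t s) /\
  ((forall x, radical r (inA src tgt s t) (inA src tgt t s) x <->
              @inA k I Q1 src tgt s t x) <-> ~ Anz k src tgt t s).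
Proof.
move=> HM; have [f [Hf Hfnz]] := HM; split; split.
- move=> H; apply: NNPP => HnA; apply: Hfnz.
  by apply/H/(rad_noA HnA).
- by move=> HA x; apply: rad_A.
- move=> H HA; apply: Hfnz.
  by apply/(rad_A HA HM r f)/H.
- by move=> HnA x; apply: rad_noA.
Qed.
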